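(* Let $C=U_d\cdots U_1$ be a Clifford circuit of depth $d$ on $n$ qubits, with $C_i=U_i\cdots U_1$ and $\mathcal C_i(s)=C_isC_i^\dagger$. For a set of qubits $A$ and an integer $w$, let $S_w^A$ be the set of phaseless Pauli operators $s\in\{I,X,Y,Z\}^{\otimes n}$ such that $\min_i|\mathcal C_i(s)|=w$ and, for every $i$, $\mathcal C_i(s)$ is supported only in $A$. Then $|S_w^A|\le d\binom{|A|}{w}3^w$.
   Context: $|P|$ denotes the weight of a Pauli operator $P$, i.e. the number of qubits on which it acts as a non-identity single-qubit Pauli (phases are ignored). The minimum and the support condition range over the timesteps $i=1,\dots,d$. *)

(* Defs.v *)
From HB Require Import structures.
From mathcomp Require Import all_boot all_algebra all_field.
From mathcomp Require Import boolp.
Set Implicit Arguments. Unset Strict Implicit. Unset Printing Implicit Defensive.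
Import GRing.Theory Num.Theory.
Local Open Scope ring_scope.

(* Phaseless n-qubit Pauli operators: s k = 0,1,2,3 encodes I,X,Y,Z on qubit k. *)
Definition pauli (n : nat) := {ffun 'I_n -> 'I_4}.

Definition pauli1 (a : 'I_4) : 'M[algC]_2 :=
  \matrix_(x < 2, y < 2)
    match nat_of_ord a with
    | 0%N => if x == y then 1 else 0
    | 1%N => if x == y then 0 else 1
    | 2%N => if x == y then 0 else (if (x == 0 :> nat) then - 'i else 'i)
    | _   => if x == y then (if (x == 0 :> nat) then 1 else -1) else 0
    end.

(* k-th bit of a computational-basis index x < 2^n (qubit k). *)
Definition qbit (n : nat) (x : 'I_(2 ^ n)) (k : 'I_n) : 'I_2 :=
  inord (odd (x %/ 2 ^ k)).

Definition pauli_mx (n : nat) (s : pauli n) : 'M[algC]_(2 ^ n) :=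
  \matrix_(x, y) \prod_(k < n) pauli1 (s k) (qbit x k) (qbit y k).

Definition adjmx (m : nat) (U : 'M[algC]_m) : 'M[algC]_m := map_mx (fun z : algC => z^*) U^T.

Definition unitary_mx (m : nat) (U : 'M[algC]_m) : Prop := U *m adjmx U = 1%:M.

(* t is the phaseless image U s U^dagger of s: U P_s U^dagger = c P_t for a phase c *)
Definition conj_img (n : nat) (U : 'M[algC]_(2 ^ n)) (s t : pauli n) : Prop :=
  exists c : algC, U *m pauli_mx s *m adjmx U = c *: pauli_mx t.

Definition clifford (n : nat) (U : 'M[algC]_(2 ^ n)) : Prop :=
  unitary_mx U /\ forall s : pauli n, exists t : pauli n, conj_img U s t.

Definition pweight (n : nat) (s : pauli n) : nat := #|[set k | s k != 0]|.
Definition supported_in (n : nat) (A : {set 'I_n}) (s : pauli n) : Prop :=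
  forall k, s k != 0 -> k \in A.

(* Layers U_1, ..., U_d are given as U 0, ..., U (d-1);
   partial circuit C_i = U_i ... U_1 is circ_prefix U i. *)
Fixpoint circ_prefix (n : nat) (U : nat -> 'M[algC]_(2 ^ n)) (i : nat) : 'M[algC]_(2 ^ n) :=
  match i with
  | 0%N => 1%:M
  | i'.+1 => U i' *m circ_prefix U i'
  end.

Definition in_SwA (n d : nat) (U : nat -> 'M[algC]_(2 ^ n)) (A : {set 'I_n}) (w : nat)
    (s : pauli n) : Prop :=
  (forall i : nat, (1 <= i <= d)%N -> forall t, conj_img (circ_prefix U i) s t ->
      supported_in A t) /\
  (exists i : nat, (1 <= i <= d)%N /\
      exists t, conj_img (circ_prefix U i) s t /\ pweight t = w) /\
  (forall i : nat, (1 <= i <= d)%N -> forall t, conj_img (circ_prefix U i) s t ->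
      (w <= pweight t)%N).

Definition SwA (n d : nat) (U : nat -> 'M[algC]_(2 ^ n)) (A : {set 'I_n}) (w : nat)
  : {set pauli n} := [set s | `[< in_SwA d U A w s >]].

(* Main.v *)
Require Import Defs.
From mathcomp Require Import all_boot all_algebra all_field.
From mathcomp Require Import boolp.
Set Implicit Arguments. Unset Strict Implicit. Unset Printing Implicit Defensive.
Import GRing.Theory Num.Theory.

Section Aux.
Local Open Scope ring_scope.

Definition xb (a : 'I_4) : 'I_2 :=
  if (a == 1%N :> nat) || (a == 2%N :> nat) then ord_max else ord0.
Definition nxb (a : 'I_4) : 'I_2 :=
  if (a == 1%N :> nat) || (a == 2%N :> nat) then ord0 else ord_max.

Lemma p1_neq0 (u : 'I_4) : pauli1 u ord0 (xb u) != 0.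
Proof.
case: u => [[|[|[|[|m]]]] Hm] //; rewrite /pauli1 mxE /xb /=;
  rewrite ?oppr_eq0 ?neq0Ci ?oner_eq0 //.
Qed.

Lemma negx0 (x : algC) : x = - x -> x == 0.
Proof. by move/eqP; rewrite -addr_eq0 -mulr2n mulrn_eq0. Qed.

Lemma key_local (u u' : 'I_4) (a b R R' : algC) : u != u' -> a != 0 -> R != 0 ->
 a * (pauli1 u ord0 (xb u) * R) = b * (pauli1 u' ord0 (xb u) * R') ->
 a * (pauli1 u ord_max (nxb u) * R) = b * (pauli1 u' ord_max (nxb u) * R') -> False.
Proof.
move=> + a0 R0.
case: u => [[|[|[|[|m]]]] Hm] //; case: u' => [[|[|[|[|m']]]] Hm'] //;
 rewrite /pauli1 !mxE /xb /nxb /= => _; rewrite ?mul1r ?mul0r ?mulr0 => E1 E2.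
all: try (have := mulf_neq0 a0 R0; apply/negP; rewrite negbK). all: try by rewrite ?E1 ?E2. all: rewrite ?mulN1r ?mulNr ?mulrN in E1 E2.
all: try by move: E1; rewrite -E2 => /negx0.
all: try by move: E2; rewrite -E1 => /negx0.
all: try (move/eqP: E1; rewrite oppr_eq0 => /eqP E1).
all: try (move/eqP: E2; rewrite oppr_eq0 => /eqP E2).
all: try by apply/eqP; apply: (mulfI (@neq0Ci algC)); rewrite mulr0 mulrCA; exact: E1.
all: try by apply/eqP; apply: (mulfI (@neq0Ci algC)); rewrite mulr0 mulrCA; exact: E2.
all: try by move: E1; rewrite -E2 => /negx0/eqP E; apply/eqP; apply: (mulfI (@neq0Ci algC)); rewrite mulr0 mulrCA; exact: E.
all: try by move: E2; rewrite -E1 => /negx0/eqP E; apply/eqP; apply: (mulfI (@neq0Ci algC)); rewrite mulr0 mulrCA; exact: E.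
Qed.

Lemma bits_eq n (x y : nat) : (x < 2 ^ n)%N -> (y < 2 ^ n)%N ->
  (forall k, (k < n)%N -> odd (x %/ 2 ^ k) = odd (y %/ 2 ^ k)) -> x = y.
Proof.
elim: n x y => [|n IH] x y.
  by rewrite expn0 !ltnS !leqn0 => /eqP -> /eqP ->.
move=> hx hy H.
have h0 : odd x = odd y by have := H 0%N isT; rewrite expn0 !divn1.
have hh : x./2 = y./2.
  apply: IH.
  - by rewrite -divn2 ltn_divLR // -expnSr.
  - by rewrite -divn2 ltn_divLR // -expnSr.
  move=> k hk; rewrite -!divn2 -!divnMA -expnS; exact: H.
by rewrite -[x]odd_double_half -[y]odd_double_half h0 hh.
Qed.

Definition qbitv n (x : 'I_(2 ^ n)) : {ffun 'I_n -> 'I_2} := [ffun k => qbit x k].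

Lemma qbitE n (x : 'I_(2 ^ n)) k : nat_of_ord (qbit x k) = odd (x %/ 2 ^ k).
Proof. by rewrite /qbit inordK //; case: odd. Qed.

Lemma qbitv_inj n : injective (@qbitv n).
Proof.
move=> x y /ffunP H; apply: val_inj; apply: (@bits_eq n _ _ (ltn_ord x) (ltn_ord y)) => k hk.
have := H (Ordinal hk); rewrite !ffunE => /(congr1 val).
rewrite /= !qbitE => E; apply/eqP; move/eqP: E; by case: odd; case: odd.
Qed.

Lemma qbit_surj n (f : {ffun 'I_n -> 'I_2}) : exists x : 'I_(2 ^ n), qbitv x = f.
Proof.
have : f \in codom (@qbitv n).
  by apply: inj_card_onto; [exact: qbitv_inj | rewrite card_ffun !card_ord].
by case/codomP=> x ->; exists x.
Qed.

Definition E n (s : pauli n) (fx fy : {ffun 'I_n -> 'I_2}) : algC :=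
  \prod_(k < n) pauli1 (s k) (fx k) (fy k).

Lemma entry n (fx fy : {ffun 'I_n -> 'I_2}) :
  exists x y, forall s, pauli_mx s x y = E s fx fy.
Proof.
have [x hx] := qbit_surj fx; have [y hy] := qbit_surj fy.
exists x, y => s; rewrite /pauli_mx mxE /E -hx -hy.
by apply: eq_bigr => k _; rewrite !ffunE.
Qed.

Definition fx0 n : {ffun 'I_n -> 'I_2} := [ffun _ => ord0].
Definition fy0 n (s : pauli n) : {ffun 'I_n -> 'I_2} := [ffun j => xb (s j)].

Lemma E0_neq0 n (s : pauli n) (P : pred 'I_n) :
  \prod_(k | P k) pauli1 (s k) (fx0 n k) (fy0 s k) != 0.
Proof. by apply/prodf_neq0 => k _; rewrite !ffunE p1_neq0. Qed.

Lemma pauli_neq0 n (s : pauli n) : pauli_mx s != 0.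
Proof.
have [x [y H]] := entry (fx0 n) (fy0 s).
apply/negP => /eqP/matrixP/(_ x y); rewrite H mxE => /eqP.
by apply/negP; apply: E0_neq0.
Qed.

Lemma scaleE m (c : algC) (A : 'M[algC]_m) i j : (c *: A) i j = c * A i j.
Proof. by rewrite mxE. Qed.

Lemma E_split n (k : 'I_n) (s : pauli n) fx fy :
  E s fx fy = pauli1 (s k) (fx k) (fy k) * \prod_(j | j != k) pauli1 (s j) (fx j) (fy j).
Proof. by rewrite /E (bigD1 k). Qed.

Lemma key n (s s' : pauli n) (a b : algC) : a != 0 ->
  a *: pauli_mx s = b *: pauli_mx s' -> s = s'.
Proof.
move=> a0 /matrixP HM.
apply/eqP/negPn/negP => Hne.
have [k Hk] : exists k, s k != s' k.
  apply/existsP; rewrite -negb_forall; apply: contra Hne => /forallP H.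
  by apply/eqP/ffunP => k; apply/eqP.
pose fx1 : {ffun 'I_n -> 'I_2} := [ffun j => if j == k then ord_max else ord0].
pose fy1 : {ffun 'I_n -> 'I_2} := [ffun j => if j == k then nxb (s k) else xb (s j)].
have [x0 [y0 H0]] := entry (fx0 n) (fy0 s).
have [x1 [y1 H1]] := entry fx1 fy1.
have := HM x0 y0; have := HM x1 y1; rewrite !scaleE !H0 !H1 !(E_split k).
rewrite !ffunE !eqxx.
set R := \prod_(j | j != k) pauli1 (s j) (fx0 n j) (fy0 s j).
set R' := \prod_(j | j != k) pauli1 (s' j) (fx0 n j) (fy0 s j).
have -> : \prod_(j | j != k) pauli1 (s j) (fx1 j) (fy1 j) = R.
  by apply: eq_bigr => j /negPf hj; rewrite !ffunE hj.
have -> : \prod_(j | j != k) pauli1 (s' j) (fx1 j) (fy1 j) = R'.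
  by apply: eq_bigr => j /negPf hj; rewrite !ffunE hj.
move=> E2 E1.
exact: (key_local Hk a0 (E0_neq0 s _) E1 E2).
Qed.

Lemma adjmxM m (A B : 'M[algC]_m) : adjmx (A *m B) = adjmx B *m adjmx A.
Proof.
apply/matrixP => i j; rewrite /adjmx !mxE rmorph_sum; apply: eq_bigr => k _.
by rewrite !mxE rmorphM mulrC.
Qed.

Lemma adjmx1 m : adjmx (1%:M : 'M[algC]_m) = 1%:M.
Proof.
apply/matrixP => i j; rewrite /adjmx !mxE eq_sym.
by case: (i == j); rewrite /= ?conjC1 ?conjC0.
Qed.

Lemma prefix_unitary n d (U : nat -> 'M[algC]_(2 ^ n))
  (HU : forall j : nat, (j < d)%N -> clifford (U j)) i :
  (i <= d)%N -> unitary_mx (circ_prefix U i).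
Proof.
elim: i => [|i IH] hi /=.
  by rewrite /unitary_mx adjmx1 mul1mx.
have [HUi _] := HU i hi.
rewrite /unitary_mx adjmxM mulmxA -[_ *m circ_prefix U i *m _]mulmxA.
by rewrite IH ?(ltnW hi) // mulmx1.
Qed.

Lemma conj_inj n (M : 'M[algC]_(2 ^ n)) s s' t :
  unitary_mx M -> conj_img M s t -> conj_img M s' t -> s = s'.
Proof.
move=> HM [c Hc] [c' Hc'].
have HM' : adjmx M *m M = 1%:M by apply: mulmx1C.
have back u e : M *m pauli_mx u *m adjmx M = e *: pauli_mx t ->
    pauli_mx u = e *: (adjmx M *m pauli_mx t *m M).
  move=> He.
  have : adjmx M *m (M *m pauli_mx u *m adjmx M) *m M = pauli_mx u.
    by rewrite !mulmxA HM' mul1mx -mulmxA HM' mulmx1.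
  by rewrite He -scalemxAr -scalemxAl => <-.
have Hs := back _ _ Hc; have Hs' := back _ _ Hc'.
have c0 : c' != 0.
  by apply: contraNneq (pauli_neq0 s') => e0; rewrite Hs' e0 scale0r.
apply: (key c0 (b := c)).
by rewrite Hs Hs' !scalerA mulrC.
Qed.

End Aux.

Definition Tset n (A : {set 'I_n}) (w : nat) : {set pauli n} :=
  [set t : pauli n | (pweight t == w) && [forall k, (t k != 0%R) ==> (k \in A)]].

Lemma card_bigcup_le (I : finType) (T : finType) (P : pred I) (F : I -> {set T}) :
  #|\bigcup_(i | P i) F i| <= \sum_(i | P i) #|F i|.
Proof.
apply: (big_rec2 (fun (X : {set T}) m => #|X| <= m)); first by rewrite cards0.
move=> i X m _ Hm; apply: leq_trans (leq_card_setU _ _) _; exact: leq_add.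
Qed.

Lemma card_T n (A : {set 'I_n}) w : #|Tset A w| <= 'C(#|A|, w) * 3 ^ w.
Proof.
pose D := [set B : {set 'I_n} | B \subset A & #|B| == w].
have sub : Tset A w \subset
    \bigcup_(B in D) [set t : pauli n | t \in pffun_on 0%R B (predC1 0%R)].
  apply/subsetP => t; rewrite inE => /andP [/eqP Hw /forallP Hs].
  apply/bigcupP; exists [set k | t k != 0%R].
    rewrite inE -Hw eqxx andbT; apply/subsetP => k; rewrite inE.
    by move=> hk; move/implyP: (Hs k); apply.
  rewrite inE; apply/pffun_onP; split.
    by apply/subsetP => k; rewrite supportE inE.
  by move=> _ /imageP [x xB ->]; rewrite inE in xB; rewrite inE.
apply: leq_trans (subset_leq_card sub) _.
apply: leq_trans (card_bigcup_le _ _) _.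
rewrite -(cards_draws A w) -/D -sum_nat_const.
apply: leq_sum => B; rewrite inE => /andP [_ /eqP <-].
by rewrite cardsE card_pffun_on cardC1 card_ord.
Qed.

Lemma X_card n (M : 'M[algC]_(2 ^ n)) (HM : unitary_mx M) (T : {set pauli n}) :
  #|[set s | [exists t in T, `[< conj_img M s t >]]]| <= #|T|.
Proof.
set X := [set s | _].
pose g s := odflt s [pick t in T | `[< conj_img M s t >]].
have gP s : s \in X -> (g s \in T) /\ conj_img M s (g s).
  rewrite inE => /exists_inP [t tT /asboolP Ht]; rewrite /g.
  case: pickP => [t' /andP [t'T /asboolP Ht'] | /(_ t)] //=.
  by rewrite tT /=; move/asboolP.
rewrite -(card_in_imset (f := g)).
  apply: subset_leq_card; apply/subsetP => _ /imsetP [s sX ->].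
  by case: (gP s sX).
move=> s1 s2 h1 h2 e; case: (gP _ h1) (gP _ h2) => _ c1 [_ c2].
rewrite e in c1; exact: conj_inj HM c1 c2.
Qed.

Theorem lemma4 (n d : nat) (U : nat -> 'M[algC]_(2 ^ n))
  (HU : forall j : nat, (j < d)%N -> clifford (U j))
  (A : {set 'I_n}) (w : nat) :
  (#|SwA d U A w| <= d * 'C(#|A|, w) * 3 ^ w)%N.
Proof.
pose X (i : 'I_d) := [set s | [exists t in Tset A w,
   `[< conj_img (circ_prefix U i.+1) s t >]]].
have sub : SwA d U A w \subset \bigcup_(i < d) X i.
  apply/subsetP => s; rewrite inE => /asboolP [Hsup [[i [/andP [hi1 hi2] [t [Ht Hw]]]] _]].
  case: i hi1 hi2 Ht => [//|j] hi1 hi2 Ht.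
  apply/bigcupP; exists (Ordinal hi2) => //.
  rewrite inE; apply/exists_inP; exists t; last exact/asboolP.
  rewrite inE Hw eqxx /=; apply/forallP => k; apply/implyP.
  by apply: (Hsup j.+1 _ t Ht k); rewrite hi1 hi2.
apply: leq_trans (subset_leq_card sub) _.
apply: leq_trans (card_bigcup_le _ _) _.
rewrite -mulnA.
apply: leq_trans (_ : \sum_(i < d) #|Tset A w| <= _).
  apply: leq_sum => i _; apply: X_card; apply: (prefix_unitary HU).
  exact: ltn_ord.
by rewrite sum_nat_const card_ord leq_mul2l card_T orbT.
Qed.
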